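(* Let $R$ be a finitely generated standard algebra with a rate filtration $\mathbf F$ of some degree $d$ such that the set $\mathcal{H}$ of Hilbert series $\{I(z): I\in\mathbf F\}$ is finite. Then the Hilbert series $R(z)$ of $R$ and the Hilbert series $I(z)$ of every $I\in\mathbf F$ are rational functions. Moreover, if $\mathcal H$ contains exactly $s$ nonzero elements, then each of these rational functions can be written as a quotient of two polynomials with integer coefficients of degrees at most $ds$.
   Context: $R$ standard: graded, $R_0=k$, generated by $R_1$, finite-dimensional components, $R_+=\bigoplus_{i>0}R_i$. The Hilbert series of a graded space $V$ is $V(z)=\sum_j\dim V_j z^j$. For a homogeneous right ideal $J$, $m(J)$ is the maximal degree of a minimal homogeneous generator. A rate filtration is a set $\mathbf F$ of finitely generated homogeneous right ideals with $0,R_+\in\mathbf F$ such that for every $0\ne I\in\mathbf F$ there exist $J\in\mathbf F$, $J\ne I$, and a homogeneous $x\in I$ with $I=J+xR$, $m(J)\le m(I)$, and $(J:x)=\{a\in R: xa\in J\}\in\mathbf F$; it is of degree $d$ if $m(I)\le d$ for all $I\in\mathbf F$. *)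

(* Defs.v *)
From HB Require Import structures.
From mathcomp Require Import all_boot all_order all_algebra.
Set Implicit Arguments. Unset Strict Implicit. Unset Printing Implicit Defensive.
Import GRing.Theory.
Local Open Scope ring_scope.

Section Graded.
Variables (k : fieldType) (A : algType k).

Definition in_span (s : seq A) (a : A) : Prop :=
  exists c : nat -> k, a = \sum_(i < size s) c i *: s`_i.

Definition lin_indep (s : seq A) : Prop :=
  forall c : nat -> k, \sum_(i < size s) c i *: s`_i = 0 ->
    forall i, (i < size s)%N -> c i = 0.

Definition dim_is (V : A -> Prop) (n : nat) : Prop :=
  exists s : seq A, size s = n /\ lin_indep s /\ forall a, V a <-> in_span s a.

(* ---------- standard graded algebra: G n is the component R_n ---------- *)
Variable G : nat -> A -> Prop.

Definition is_subspace (V : A -> Prop) : Prop :=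
  [/\ V 0, (forall x y, V x -> V y -> V (x + y)) & (forall (c : k) x, V x -> V (c *: x))].

Definition standard_graded : Prop :=
  (forall n, is_subspace (G n)) /\
      (* R = (+)_n R_n : existence and uniqueness of homogeneous decompositions *)
      (forall a : A, exists (N : nat) (f : nat -> A),
          (forall i, G i (f i)) /\ a = \sum_(i < N) f i) /\
      (forall (N : nat) (f : nat -> A), (forall i, G i (f i)) ->
          \sum_(i < N) f i = 0 -> forall i, (i < N)%N -> f i = 0) /\
      (forall i j x y, G i x -> G j y -> G (i + j)%N (x * y)) /\
      (forall a, G 0 a <-> exists c : k, a = c%:A) /\
      (* R is generated by R_1 as a k-algebra *)
      (forall S : A -> Prop, S 1 -> (forall x y, S x -> S y -> S (x + y)) ->
          (forall x y, S x -> S y -> S (x * y)) ->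
          (forall (c : k) x, S x -> S (c *: x)) ->
          (forall x, G 1 x -> S x) -> forall a, S a) /\
      (forall n, exists s : seq A, forall a, G n a <-> in_span s a).

Definition Rplus (a : A) : Prop :=
  exists (N : nat) (f : nat -> A), (forall i, G i.+1 (f i)) /\ a = \sum_(i < N) f i.

Definition is_hilb (V : A -> Prop) (f : nat -> nat) : Prop :=
  forall j, dim_is (fun a => V a /\ G j a) (f j).

Definition rgen (gens : seq A) (a : A) : Prop :=
  exists r : nat -> A, a = \sum_(i < size gens) gens`_i * r i.

Definition same_set (U V : A -> Prop) : Prop := forall a, U a <-> V a.

Definition hom_gens (J : A -> Prop) (gens : seq A) (degs : seq nat) : Prop :=
  [/\ size degs = size gens,
      (forall i, (i < size gens)%N -> G (nth 0%N degs i) gens`_i)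
    & same_set J (rgen gens)].

Definition min_hom_gens (J : A -> Prop) (gens : seq A) (degs : seq nat) : Prop :=
  hom_gens J gens degs /\
  forall i, (i < size gens)%N ->
    ~ same_set J (rgen (take i gens ++ drop i.+1 gens)).

Definition fg_hom_right_ideal (J : A -> Prop) : Prop :=
  exists gens degs, hom_gens J gens degs.

(* m(J) = n : maximal degree of a minimal homogeneous generator (0 if J = 0) *)
Definition mdeg (J : A -> Prop) (n : nat) : Prop :=
  exists gens degs, min_hom_gens J gens degs /\ n = (\max_(e <- degs) e)%N.

Definition mdeg_le (J I : A -> Prop) : Prop :=
  forall mJ mI, mdeg J mJ -> mdeg I mI -> (mJ <= mI)%N.

Definition rate_filtration (F : (A -> Prop) -> Prop) : Prop :=
  [/\ (forall I, F I -> fg_hom_right_ideal I),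
      (exists I, F I /\ same_set I (fun a => a = 0)),
      (exists I, F I /\ same_set I Rplus)
    & (forall I, F I -> ~ same_set I (fun a => a = 0) ->
        exists J x, F J /\ ~ same_set J I /\ I x /\ (exists n, G n x) /\
           same_set I (fun a => exists j r, J j /\ a = j + x * r) /\
           mdeg_le J I /\
           (exists K, F K /\ same_set K (fun a => J (x * a))))].

Definition filtration_of_degree (F : (A -> Prop) -> Prop) (d : nat) : Prop :=
  forall I m, F I -> mdeg I m -> (m <= d)%N.

Definition in_H (F : (A -> Prop) -> Prop) (f : nat -> nat) : Prop :=
  exists I, F I /\ is_hilb I f.

Definition H_finite (F : (A -> Prop) -> Prop) : Prop :=
  exists L : seq (nat -> nat), forall f, in_H F f ->
    exists2 i, (i < size L)%N & f = nth (fun _ => 0%N) L i.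

Definition H_nonzero_card (F : (A -> Prop) -> Prop) (s : nat) : Prop :=
  exists L : seq (nat -> nat),
    [/\ size L = s,
        (forall i j, (i < size L)%N -> (j < size L)%N ->
           nth (fun _ => 0%N) L i = nth (fun _ => 0%N) L j -> i = j),
        (forall i, (i < size L)%N ->
           in_H F (nth (fun _ => 0%N) L i) /\
           nth (fun _ => 0%N) L i <> (fun _ => 0%N))
      & (forall f, in_H F f -> f <> (fun _ => 0%N) ->
           exists2 i, (i < size L)%N & f = nth (fun _ => 0%N) L i)].

End Graded.

(* f(z) = p(z)/q(z) with p, q in Z[z], q <> 0, i.e. q * f = p in Z[[z]] *)
Definition rat_repr (f : nat -> nat) (p q : {poly int}) : Prop :=
  q != 0 /\
  forall n, \sum_(i < n.+1) q`_i * (f (n - i)%N)%:Z = p`_n.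

Definition rational_series (f : nat -> nat) : Prop :=
  exists p q, rat_repr f p q.

Definition rational_series_deg (b : nat) (f : nat -> nat) : Prop :=
  exists p q, rat_repr f p q /\ (size p <= b.+1)%N /\ (size q <= b.+1)%N.

(* Main.v *)
Require Import Defs.
From mathcomp Require Import all_boot all_order all_algebra.
From mathcomp Require Import zify ring.
From Stdlib Require Import Classical ClassicalEpsilon FunctionalExtensionality.
Set Implicit Arguments. Unset Strict Implicit. Unset Printing Implicit Defensive.
Import GRing.Theory.

Local Open Scope ring_scope.
Local Open Scope ring_scope.

Section LinAlg.
Variables (k : fieldType) (A : algType k).
Implicit Types (s u v : seq A) (a : A) (c : nat -> k).

Definition lc c s : A := \sum_(i < size s) c i *: s`_i.

Lemma lc_cat c u v : lc c (u ++ v) = lc c u + lc (fun i => c (size u + i)%N) v.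
Proof.
rewrite /lc size_cat big_split_ord /=; congr (_ + _).
  by apply: eq_bigr => i _; rewrite nth_cat ltn_ord.
by apply: eq_bigr => i _; rewrite nth_cat ltnNge leq_addr /= addKn.
Qed.

Lemma in_span0 s : in_span s 0.
Proof. by exists (fun _ => 0); rewrite big1 // => i _; rewrite scale0r. Qed.

Lemma in_spanD s a b : in_span s a -> in_span s b -> in_span s (a + b).
Proof.
move=> [c ->] [c' ->]; exists (fun i => c i + c' i).
by rewrite -big_split; apply: eq_bigr => i _; rewrite scalerDl.
Qed.

Lemma in_spanZ s (x : k) a : in_span s a -> in_span s (x *: a).
Proof.
move=> [c ->]; exists (fun i => x * c i).
by rewrite scaler_sumr; apply: eq_bigr => i _; rewrite scalerA.
Qed.

Lemma in_spanN s a : in_span s a -> in_span s (- a).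
Proof. by move=> h; rewrite -scaleN1r; apply: in_spanZ. Qed.

Lemma in_span_sum s n (F : 'I_n -> A) :
  (forall i, in_span s (F i)) -> in_span s (\sum_(i < n) F i).
Proof.
move=> h; apply: (big_ind (in_span s)); [exact: in_span0|exact: in_spanD|by move=> i _].
Qed.

Lemma in_span_nth s i : (i < size s)%N -> in_span s s`_i.
Proof.
move=> lti; exists (fun j => if j == i then 1 else 0).
rewrite (bigD1 (Ordinal lti)) //= eqxx scale1r big1 ?addr0 // => j /negbTE.
by rewrite -val_eqE /= => ->; rewrite scale0r.
Qed.

Lemma in_span_trans s t a :
  (forall i, (i < size t)%N -> in_span s t`_i) -> in_span t a -> in_span s a.
Proof.
move=> ht [c ->]; apply: in_span_sum => i; apply: in_spanZ; exact: ht.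
Qed.

Lemma in_span_lc s c : in_span s (lc c s).
Proof. by exists c. Qed.

Lemma in_span_catl u v a : in_span u a -> in_span (u ++ v) a.
Proof.
move=> h; apply: (in_span_trans _ h) => i lti.
have -> : u`_i = (u ++ v)`_i by rewrite nth_cat lti.
by apply: in_span_nth; rewrite size_cat (leq_trans lti) ?leq_addr.
Qed.

Lemma in_span_catr u v a : in_span v a -> in_span (u ++ v) a.
Proof.
move=> h; apply: (in_span_trans _ h) => i lti.
have -> : v`_i = (u ++ v)`_(size u + i) by rewrite nth_cat ltnNge leq_addr /= addKn.
by apply: in_span_nth; rewrite size_cat ltn_add2l.
Qed.

Lemma span_sub (W : A -> Prop) s a : is_subspace W ->
  (forall i, (i < size s)%N -> W s`_i) -> in_span s a -> W a.
Proof.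
move=> [W0 WD WZ] hs [c ->].
apply: (big_ind W) => // i _; apply: WZ; exact: hs.
Qed.

Lemma indep_size s t : lin_indep s ->
  (forall i, (i < size s)%N -> in_span t s`_i) -> (size s <= size t)%N.
Proof.
move=> hind hsp.
have [C hC] : exists C : nat -> nat -> k,
    forall i, (i < size s)%N -> s`_i = \sum_(j < size t) C i j *: t`_j.
  have : forall i, exists c, (i < size s)%N -> s`_i = \sum_(j < size t) c j *: t`_j.
    move=> i; case: (ltnP i (size s)) => hi.
      by have [c hc] := hsp i hi; exists c.
    by exists (fun _ => 0).
  move=> /(fun h => choice _ h) [C hC]; exists C => i; exact: hC.
rewrite leqNgt; apply/negP => lt_ts.
pose M : 'M[k]_(size s, size t) := \matrix_(i, j) C i j.
have rk : (\rank M < size s)%N by apply: leq_ltn_trans (rank_leq_col M) lt_ts.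
have : kermx M != 0.
  by rewrite -mxrank_eq0 mxrank_ker subn_eq0 -ltnNge.
case/rowV0Pn => y /sub_kermxP yM ynz.
pose c n := oapp (y 0) 0 (insub n : option 'I_(size s)).
have hsum : \sum_(i < size s) c i *: s`_i = 0.
  transitivity (\sum_(i < size s) \sum_(j < size t) (y 0 i * C i j) *: t`_j).
    apply: eq_bigr => i _; rewrite hC // scaler_sumr /c valK /=.
    by apply: eq_bigr => j _; rewrite scalerA.
  rewrite exchange_big /= big1 // => j _.
  have hj : \sum_(i < size s) y 0 i * C i j = 0.
    transitivity (\sum_(i < size s) y 0 i * M i j).
      by apply: eq_bigr => i _; rewrite mxE.
    by have := congr1 (fun m : 'M[k]_(1, size t) => m 0 j) yM; rewrite !mxE.
  by rewrite -scaler_suml hj scale0r.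

apply/negP: ynz; rewrite negbK; apply/eqP/rowP => i; rewrite mxE.
by have := hind c hsum i (ltn_ord i); rewrite /c valK /=.
Qed.

Lemma dim_unique (V : A -> Prop) n m : dim_is V n -> dim_is V m -> n = m.
Proof.
move=> [b [<- [ib hb]]] [b' [<- [ib' hb']]].
apply/eqP; rewrite eqn_leq; apply/andP; split.
  apply: indep_size ib _ => i lti; apply/hb'/hb; exact: in_span_nth.
apply: indep_size ib' _ => i lti; apply/hb/hb'; exact: in_span_nth.
Qed.

Lemma dim_same (V W : A -> Prop) n : same_set V W -> dim_is V n -> dim_is W n.
Proof.
move=> e [b [sb [ib hb]]]; exists b; split=> //; split=> // a.
by rewrite -e.
Qed.

Lemma indep_rcons s w : lin_indep s -> ~ in_span s w -> lin_indep (rcons s w).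
Proof.
move=> hi hw c; rewrite size_rcons big_ord_recr /=.
have E : forall i : 'I_(size s), (rcons s w)`_i = s`_i.
  by move=> i; rewrite nth_rcons ltn_ord.
rewrite (eq_bigr (fun i : 'I_(size s) => c i *: s`_i)); last by move=> i _; rewrite E.
rewrite nth_rcons ltnn eqxx => hsum.
have cl : c (size s) = 0.
  apply/eqP; apply/negPn/negP => nz; apply: hw.
  have hw' : c (size s) *: w = - \sum_(i < size s) c i *: s`_i.
    by apply/eqP; rewrite -addr_eq0 addrC hsum.
  have -> : w = (c (size s))^-1 *: (c (size s) *: w).
    by rewrite scalerA mulVf // scale1r.
  by rewrite hw'; apply/in_spanZ/in_spanN; exists c.
move: hsum; rewrite cl scale0r addr0 => hsum i; rewrite ltnS leq_eqVlt.
case/orP=> [/eqP -> // | lti]; exact: hi hsum i lti.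
Qed.

Lemma indep_nil : lin_indep ([::] : seq A).
Proof. by move=> c _ i. Qed.

Lemma extend_basis (W : A -> Prop) t u : is_subspace W ->
  (forall a, W a -> in_span t a) -> lin_indep u ->
  (forall i, (i < size u)%N -> W u`_i) ->
  exists v, [/\ lin_indep (u ++ v), (forall i, (i < size v)%N -> W v`_i)
    & forall a, W a <-> in_span (u ++ v) a].
Proof.
move=> hW ht.
move: {2}(size t - size u)%N (leqnn (size t - size u)%N) => n.
elim: n u => [|n IH] u hn hu huW.
  have hall : forall a, W a -> in_span u a.
    move=> a Wa; apply: NNPP => na.
    have : (size (rcons u a) <= size t)%N.
      apply: (indep_size (indep_rcons hu na)) => i; rewrite size_rcons ltnS leq_eqVlt nth_rcons.
      case/orP => [/eqP -> | lti]; first by rewrite ltnn eqxx; exact: ht.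
      by rewrite lti; apply: ht; apply: huW.
    rewrite size_rcons -subn_gt0 lt0n; move: hn; rewrite leqn0 => /eqP ->.
    by [].
  exists [::]; rewrite cats0; split; [exact: hu | by move=> i | ].
  by move=> a; split; [exact: hall | exact: span_sub hW huW].
case: (classic (forall a, W a -> in_span u a)) => hall.
  exists [::]; rewrite cats0; split; [exact: hu | by move=> i | ].
  by move=> a; split; [exact: hall | exact: span_sub hW huW].
have [w [Ww nw]] : exists w, W w /\ ~ in_span u w.
  apply: NNPP => h; apply: hall => a Wa; apply: NNPP => na; apply: h.
  by exists a.
have hu' := indep_rcons hu nw.
have hu'W : forall i, (i < size (rcons u w))%N -> W (rcons u w)`_i.
  move=> i; rewrite size_rcons ltnS leq_eqVlt nth_rcons.
  by case/orP => [/eqP -> | lti]; [rewrite ltnn eqxx | rewrite lti; apply: huW].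
have hsz : (size (rcons u w) <= size t)%N.
  by apply: (indep_size hu') => i /hu'W /ht.
have hn' : (size t - size (rcons u w) <= n)%N.
  move: hn hsz; rewrite size_rcons => hn hsz.
  by rewrite subnS -ltnS prednK ?subn_gt0.
have [v [iv Wv sv]] := IH (rcons u w) hn' hu' hu'W.
exists (w :: v); rewrite -cat_rcons; split => //.
by case=> [|i] //= /Wv.
Qed.

Lemma dim_exists (W : A -> Prop) t : is_subspace W ->
  (forall a, W a -> in_span t a) -> exists n, dim_is W n.
Proof.
move=> hW ht; have [v [iv _ sv]] := extend_basis hW ht indep_nil (fun i (hi : (i < 0)%N) => ltac:(by [])).
by exists (size v); exists v.
Qed.

Lemma dim_le (V W : A -> Prop) t n m : is_subspace V -> is_subspace W ->
  (forall a, W a -> in_span t a) -> (forall a, V a -> W a) ->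
  dim_is V n -> dim_is W m -> (n <= m)%N /\ (n = m -> forall a, W a -> V a).
Proof.
move=> hV hW ht hVW [b [sb [ib hb]]] dW.
have bW : forall i, (i < size b)%N -> W b`_i.
  by move=> i lti; apply/hVW/hb/in_span_nth.
have [v [iv Wv sv]] := extend_basis hW ht ib bW.
have : dim_is W (size b + size v) by exists (b ++ v); rewrite size_cat.
move/(dim_unique dW) => ->; split; first by rewrite -sb leq_addr.
move=> /eqP; rewrite -sb -{1}[size b]addn0 eqn_add2l eq_sym size_eq0 => /eqP ev.
by move=> a /sv; rewrite ev cats0 => /hb.
Qed.

End LinAlg.

Local Open Scope ring_scope.
Local Open Scope ring_scope.

Section LinAlg2.
Variables (k : fieldType) (A : algType k).
Implicit Types (s u v : seq A) (a : A) (c : nat -> k).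

Lemma lc_map (x : A) c v : x * lc c v = lc c (map (fun y => x * y) v).
Proof.
rewrite /lc size_map mulr_sumr; apply: eq_bigr => i _.
by rewrite -scalerAr (nth_map 0) ?mulr0 // ltn_ord.
Qed.

Lemma indep_cat u v : lin_indep u ->
  (forall c, lc c (u ++ v) = 0 -> forall i, (i < size v)%N -> c (size u + i)%N = 0) ->
  lin_indep (u ++ v).
Proof.
move=> iu h c hc.
have hv := h c hc.
have hv0 : lc (fun i => c (size u + i)%N) v = 0.
  by rewrite /lc big1 // => i _; rewrite hv // scale0r.
move: (hc); rewrite -/(lc c _) lc_cat hv0 addr0 => hu i.
rewrite size_cat => lti; case: (ltnP i (size u)) => hiu; first exact: iu hu i hiu.
by rewrite -(subnKC hiu) hv // -(ltn_add2l (size u)) subnKC.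
Qed.

Lemma dim_hilb_id (Jn Rm : A -> Prop) (x : A) t2 na nr nk :
  is_subspace Jn -> is_subspace Rm -> (forall a, Rm a -> in_span t2 a) ->
  dim_is Jn na -> dim_is Rm nr -> dim_is (fun y => Rm y /\ Jn (x * y)) nk ->
  exists ni, dim_is (fun y => exists j z, [/\ Jn j, Rm z & y = j + x * z]) ni /\
             (ni + nk = na + nr)%N.
Proof.
move=> hJ hR ht2 [b [sb [ib hb]]] dR [u [su [iu hu]]].
have huR : forall i, (i < size u)%N -> Rm u`_i.
  by move=> i lti; have [] := (hu u`_i).2 (in_span_nth lti).
have huJ : forall i, (i < size u)%N -> Jn (x * u`_i).
  by move=> i lti; have [] := (hu u`_i).2 (in_span_nth lti).
have [v [iv Rv sv]] := extend_basis hR ht2 iu huR.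
have enr : nr = (size u + size v)%N.
  by apply: (dim_unique dR); exists (u ++ v); rewrite size_cat.
have [J0 JD JZ] := hJ; have [R0 RD RZ] := hR.
pose In := fun y => exists j z, [/\ Jn j, Rm z & y = j + x * z].
have hI : is_subspace In.
  split.
  - by exists 0, 0; rewrite mulr0 addr0.
  - move=> y1 y2 [j1 [z1 [Jj1 Rz1 ->]]] [j2 [z2 [Jj2 Rz2 ->]]].
    exists (j1 + j2), (z1 + z2); split; [exact: JD | exact: RD |].
    by rewrite mulrDr addrACA.
  - move=> c0 y [j [z [Jj Rz ->]]]; exists (c0 *: j), (c0 *: z).
    by split; [exact: JZ | exact: RZ | rewrite scalerDr scalerAr].
have xlcJ : forall c, Jn (x * lc c u).
  move=> c; rewrite /lc mulr_sumr; apply: (big_ind Jn) => // i _.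
  by rewrite -scalerAr; apply/JZ/huJ.
exists (size b + size v)%N; split; last first.
  by rewrite enr -sb su addnAC addnA.
exists (b ++ map (fun y => x * y) v); split; first by rewrite size_cat size_map.
split.
  apply: indep_cat => // c hc i lti.
  move: hc; rewrite lc_cat -lc_map => hc.
  set z := lc _ v in hc.
  have Kz : Rm z /\ Jn (x * z).
    split; first by apply: (span_sub hR Rv); exact: in_span_lc.
    have -> : x * z = - lc c b by apply/eqP; rewrite -addr_eq0 addrC hc.
    by rewrite -scaleN1r; apply/JZ/(span_sub hJ) => [j ltj|]; [apply/hb/in_span_nth | exact: in_span_lc].
  have [g hg] := (hu z).1 Kz.
  pose dlt n := if (n < size u)%N then g n else - c (size b + (n - size u))%N.
  have : lc dlt (u ++ v) = 0.
    rewrite lc_cat; rewrite /lc.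
    rewrite (eq_bigr (fun i : 'I_(size u) => g i *: u`_i)); last first.
      by move=> j _; rewrite /dlt ltn_ord.
    rewrite -hg (eq_bigr (fun j : 'I_(size v) => - (c (size b + j)%N *: v`_j))); last first.
      by move=> j _; rewrite /dlt ltnNge leq_addr /= addKn scaleNr.
    by rewrite sumrN /z /lc subrr.
  move: lti; rewrite size_map => lti.
  move/(iv dlt) => /(_ (size u + i)%N); rewrite size_cat ltn_add2l => /(_ lti).
  by rewrite /dlt ltnNge leq_addr /= addKn => /eqP; rewrite oppr_eq0 => /eqP.
move=> y; split.
  move=> [j [z [Jj Rz ->]]]; apply: in_spanD; first by apply/in_span_catl/hb.
  have [c hc] := (sv z).1 Rz; rewrite hc -/(lc c _) lc_cat mulrDr.
  apply: in_spanD; first by apply/in_span_catl/hb/xlcJ.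
  by rewrite lc_map; apply/in_span_catr/in_span_lc.
apply: (span_sub hI) => i; rewrite size_cat size_map nth_cat => lti.
case: ifP => hib.
  by exists b`_i, 0; split; [apply/hb/in_span_nth | exact: R0 | rewrite mulr0 addr0].
rewrite (nth_map 0); last by rewrite -(ltn_add2l (size b)) subnKC // leqNgt hib.
exists 0, v`_(i - size b); split => //; first by apply: Rv; rewrite -(ltn_add2l (size b)) subnKC // leqNgt hib.
by rewrite add0r.
Qed.

End LinAlg2.

Local Open Scope ring_scope.
Local Open Scope ring_scope.

Section Graded.
Variables (k : fieldType) (A : algType k) (G : nat -> A -> Prop).
Hypothesis hG : standard_graded G.
Implicit Types (gens : seq A) (degs : seq nat) (I J K : A -> Prop) (x : A).

Lemma G_sub n : is_subspace (G n).
Proof. by case: hG. Qed.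

Lemma G0 n : G n 0.
Proof. by case: (G_sub n). Qed.

Lemma GD n a b : G n a -> G n b -> G n (a + b).
Proof. by case: (G_sub n) => _ h _; apply: h. Qed.

Lemma GZ n c a : G n a -> G n (c *: a).
Proof. by case: (G_sub n) => _ _ h; apply: h. Qed.

Lemma GB n a b : G n a -> G n b -> G n (a - b).
Proof. by move=> ha hb; apply: GD => //; rewrite -scaleN1r; apply: GZ. Qed.

Lemma G_uniq N (f : nat -> A) : (forall i, G i (f i)) ->
  \sum_(i < N) f i = 0 -> forall i, (i < N)%N -> f i = 0.
Proof. by case: hG => _ [_ [h _]]; apply: h. Qed.

Lemma G_mul i j x y : G i x -> G j y -> G (i + j)%N (x * y).
Proof. by case: hG => _ [_ [_ [h _]]]; apply: h. Qed.

Lemma G_zero a : G 0 a <-> exists c : k, a = c%:A.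
Proof. by case: hG => _ [_ [_ [_ [h _]]]]; apply: h. Qed.

Lemma G_fin n : exists s : seq A, forall a, G n a <-> in_span s a.
Proof. by case: hG => _ [_ [_ [_ [_ [_ h]]]]]; apply: h. Qed.

Lemma dec_ex a : exists p : nat * (nat -> A),
  (forall i, G i (p.2 i)) /\ a = \sum_(i < p.1) p.2 i.
Proof.
case: hG => _ [h _]; have [N [f hf]] := h a.
by exists (N, f).
Qed.

Definition decp a := proj1_sig (constructive_indefinite_description _ (dec_ex a)).
Lemma decpP a : (forall i, G i ((decp a).2 i)) /\ a = \sum_(i < (decp a).1) (decp a).2 i.
Proof. by rewrite /decp; case: constructive_indefinite_description. Qed.

Definition comp n a := if (n < (decp a).1)%N then (decp a).2 n else 0.

Lemma pad_sum N M (f : nat -> A) : (N <= M)%N ->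
  \sum_(i < M) (if (i < N)%N then f i else 0) = \sum_(i < N) f i.
Proof. by move=> hNM; rewrite (big_ord_widen _ _ hNM) [RHS]big_mkcond. Qed.

Lemma comp_unique N f a : (forall i, G i (f i)) -> a = \sum_(i < N) f i ->
  forall n, comp n a = if (n < N)%N then f n else 0.
Proof.
move=> hf ha n; have [hd ha'] := decpP a.
set N' := (decp a).1 in ha' *; set f' := (decp a).2 in hd ha' *.
pose M := maxn N N'.
pose g i := (if (i < N')%N then f' i else 0) - (if (i < N)%N then f i else 0).
have hg : forall i, G i (g i).
  by move=> i; apply: GB; case: ifP => _; first [exact: hd | exact: hf | exact: G0].
have hs : \sum_(i < M) g i = 0.
  by rewrite sumrB !pad_sum ?leq_maxl ?leq_maxr // -ha -ha' subrr.
have := G_uniq hg hs; rewrite /comp -/N' -/f'.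
case: (ltnP n M) => hnM.
  by move/(_ n hnM)/eqP; rewrite /g subr_eq0 => /eqP.
move=> _; have hn1 : (N' <= n)%N by apply: leq_trans (leq_maxr _ _) hnM.
have hn2 : (N <= n)%N by apply: leq_trans (leq_maxl _ _) hnM.
by rewrite ltnNge hn1 ltnNge hn2.
Qed.

Lemma comp_G n a : G n (comp n a).
Proof. rewrite /comp; case: ifP => _; [exact: (decpP a).1 | exact: G0]. Qed.

Lemma comp_dec a : exists N, (forall n, (N <= n)%N -> comp n a = 0) /\
  (forall M, (N <= M)%N -> a = \sum_(i < M) comp i a).
Proof.
exists (decp a).1; split; first by move=> n hn; rewrite /comp ltnNge hn.
move=> M hM; rewrite /comp pad_sum //; exact: (decpP a).2.
Qed.

Lemma comp_hom n m x : G m x -> comp n x = if n == m then x else 0.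
Proof.
move=> hx; rewrite (@comp_unique m.+1 (fun i => if i == m then x else 0)).
- by case: ltnP => // h; rewrite gtn_eqF.
- by move=> i; case: eqP => [->|_] //; exact: G0.
rewrite big_ord_recr /= eqxx big1 ?add0r // => i _.
by rewrite ltn_eqF.
Qed.

Lemma comp_add n a b : comp n (a + b) = comp n a + comp n b.
Proof.
have [N1 [h1 h1']] := comp_dec a; have [N2 [h2 h2']] := comp_dec b.
pose M := maxn N1 N2.
rewrite (@comp_unique M (fun i => comp i a + comp i b)).
- case: ltnP => // hM; rewrite h1 ?h2 ?addr0 //.
    by apply: leq_trans hM; rewrite leq_maxr.
  by apply: leq_trans hM; rewrite leq_maxl.
- by move=> i; apply: GD; apply: comp_G.
by rewrite big_split /= -h1' ?leq_maxl // -h2' ?leq_maxr.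
Qed.

Lemma comp_scale n c a : comp n (c *: a) = c *: comp n a.
Proof.
have [N1 [h1 h1']] := comp_dec a.
rewrite (@comp_unique N1 (fun i => c *: comp i a)).
- by case: ltnP => // hN; rewrite h1 // scaler0.
- by move=> i; apply: GZ; apply: comp_G.
by rewrite -scaler_sumr -h1'.
Qed.

Lemma comp0 n : comp n 0 = 0.
Proof. by have := comp_scale n (0 : k) (0 : A); rewrite !scale0r. Qed.

Lemma comp_sum n m (F : 'I_m -> A) : comp n (\sum_(i < m) F i) = \sum_(i < m) comp n (F i).
Proof.
by apply: (big_morph (comp n)) => [a b|]; [exact: comp_add | exact: comp0].
Qed.

Lemma comp_mul n e x r : G e x ->
  comp n (x * r) = if (e <= n)%N then x * comp (n - e) r else 0.
Proof.
move=> hx; have [N [h1 h1']] := comp_dec r.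
pose f j := if (e <= j)%N then x * comp (j - e) r else 0.
rewrite (@comp_unique (e + N) f).
- rewrite /f; case: ltnP => // hn; case: ifP => // _.
  by rewrite h1 ?mulr0 //; lia.
- move=> i; rewrite /f; case: ifP => hi; last exact: G0.
  by have := G_mul hx (comp_G (i - e) r); rewrite subnKC.
rewrite big_split_ord /= big1 ?add0r; last first.
  by move=> i _; rewrite /f leqNgt ltn_ord.
rewrite {1}(h1' N) // mulr_sumr; apply: eq_bigr => i _.
by rewrite /f leq_addr addKn.
Qed.


Definition graded (V : A -> Prop) := forall a n, V a -> V (comp n a).
Definition rideal (V : A -> Prop) := @is_subspace k A V /\ forall a b, V a -> V (a * b).

Lemma rgen_subspace gens : is_subspace (rgen gens).
Proof.
split.
- by exists (fun _ => 0); rewrite big1 // => i _; rewrite mulr0.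
- move=> x y [r1 ->] [r2 ->]; exists (fun i => r1 i + r2 i).
  by rewrite -big_split; apply: eq_bigr => i _; rewrite mulrDr.
- move=> c x [r ->]; exists (fun i => c *: r i).
  by rewrite scaler_sumr; apply: eq_bigr => i _; rewrite scalerAr.
Qed.

Lemma rgen_rideal gens : rideal (rgen gens).
Proof.
split; first exact: rgen_subspace.
move=> a b [r ->]; exists (fun i => r i * b).
by rewrite mulr_suml; apply: eq_bigr => i _; rewrite mulrA.
Qed.

Lemma rgen_gens gens i : (i < size gens)%N -> rgen gens gens`_i.
Proof.
move=> hi; exists (fun j => if j == i then 1 else 0).
rewrite (bigD1 (Ordinal hi)) //= eqxx mulr1 big1 ?addr0 // => j hj.
by rewrite ifF ?mulr0 //; apply: contraNF hj => /eqP hj; apply/eqP/val_inj.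
Qed.

Lemma rgen_min gens (J : A -> Prop) a : rideal J ->
  (forall i, (i < size gens)%N -> J gens`_i) -> rgen gens a -> J a.
Proof.
move=> [[J0 JD JZ] JM] hg [r ->].
by apply: (big_ind J) => // i _; apply/JM/hg.
Qed.

Lemma rgen_graded gens degs :
  (forall i, (i < size gens)%N -> G (nth 0%N degs i) gens`_i) -> graded (rgen gens).
Proof.
move=> hg a n [r ->]; rewrite comp_sum.
exists (fun i => if (nth 0%N degs i <= n)%N then comp (n - nth 0%N degs i) (r i) else 0).
apply: eq_bigr => i _; rewrite (comp_mul _ _ (hg i (ltn_ord i))).
by case: ifP => _; rewrite ?mulr0.
Qed.

Definition hideal (I : A -> Prop) := exists gens degs, hom_gens G I gens degs.

Lemma hideal_props I : hideal I -> [/\ rideal I, graded I & is_subspace I].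
Proof.
move=> [gens [degs [_ hg hs]]].
have [[R0 RD RZ] RM] := rgen_rideal gens.
split.
- split; first split.
  + by apply/hs.
  + by move=> x y /hs hx /hs hy; apply/hs/RD.
  + by move=> c x /hs hx; apply/hs/RZ.
  by move=> x y /hs hx; apply/hs/RM.
- by move=> a n /hs ha; apply/hs; apply: (rgen_graded hg).
split.
+ by apply/hs.
+ by move=> x y /hs hx /hs hy; apply/hs/RD.
+ by move=> c x /hs hx; apply/hs/RZ.
Qed.

Lemma subspace_cap (V W : A -> Prop) : is_subspace V -> is_subspace W ->
  is_subspace (fun a => V a /\ W a).
Proof.
move=> [V0 VD VZ] [W0 WD WZ]; split => //.
- by move=> x y [] ? ? [] ? ?; split; [apply: VD | apply: WD].
- by move=> c x [] ? ?; split; [apply: VZ | apply: WZ].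
Qed.

Lemma hilb_exists V : is_subspace V -> exists f, is_hilb G V f.
Proof.
move=> hV.
have : forall j, exists n, dim_is (fun a => V a /\ G j a) n.
  move=> j; have [t ht] := G_fin j.
  apply: (dim_exists (t := t)); first exact: subspace_cap hV (G_sub j).
  by move=> a [_ /ht].
by case/choice => f hf; exists f.
Qed.

Lemma hilb_same V W f : same_set V W -> is_hilb G V f -> is_hilb G W f.
Proof.
move=> e hf j; apply: dim_same (hf j) => a; split; case=> h1 h2; split=> //; exact/e.
Qed.

Lemma hilb_unique V f g : is_hilb G V f -> is_hilb G V g -> forall n, f n = g n.
Proof. by move=> hf hg n; apply: dim_unique (hf n) (hg n). Qed.

Lemma hilb_identity I J K x e fI fJ fK fR :
  hideal J -> G e x ->
  same_set I (fun a => exists j r, J j /\ a = j + x * r) ->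
  same_set K (fun a => J (x * a)) ->
  is_hilb G I fI -> is_hilb G J fJ -> is_hilb G K fK -> is_hilb G (fun _ => True) fR ->
  forall n, (fI n + (if (e <= n)%N then fK (n - e) else 0) =
             fJ n + (if (e <= n)%N then fR (n - e) else 0))%N.
Proof.
move=> hJ hx hI hK dI dJ dK dR n.
have [[hJs hJM] hJg hJsub] := hideal_props hJ.
case: (leqP e n) => hen; last first.
  rewrite !addn0; apply: (dim_unique (dI n)); apply: dim_same (dJ n) => a; split.
    by case=> Ja Gna; split => //; apply/hI; exists a, 0; rewrite mulr0 addr0.
  case=> /hI [j [r [Jj ->]]] Gn; split; last by [].
  have := comp_hom n Gn; rewrite eqxx => <-.
  by rewrite comp_add (comp_mul _ _ hx) leqNgt hen addr0; apply: hJg.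
set m := (n - e)%N.
have [t2 ht2] := G_fin m.
have hnm : n = (e + m)%N by rewrite subnKC.
have dRm : dim_is (G m) (fR m).
  by apply: dim_same (dR m) => a; split; [case | split].
have dK' : dim_is (fun y => G m y /\ (J (x * y) /\ G n (x * y))) (fK m).
  apply: dim_same (dK m) => a; split.
    case=> /hK Jxa Gma; split => //; split => //.
    by rewrite hnm; apply: G_mul.
  by case=> Gma [Jxa _]; split => //; apply/hK.
have [ni [dni eq]] := dim_hilb_id (subspace_cap hJsub (G_sub n)) (G_sub m)
   (fun a => (ht2 a).1) (dJ n) dRm dK'.
suff -> : fI n = ni by [].
apply: (dim_unique (dI n)); apply: dim_same dni => a; split.
  case=> [j [z [[Jj Gj] Gz ->]]]; split.
    by apply/hI; exists j, z.
  apply: GD => //; rewrite hnm; exact: G_mul.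
case=> /hI [j [r [Jj ->]]] Gn.
exists (comp n j), (comp m r); split.
- by split; [apply: hJg | apply: comp_G].
- exact: comp_G.
have := comp_hom n Gn; rewrite eqxx => <-.
by rewrite comp_add (comp_mul _ _ hx) hen.
Qed.

Lemma hilb_strict I J fI fJ : hideal I -> hideal J -> (forall a, J a -> I a) ->
  ~ same_set J I -> is_hilb G I fI -> is_hilb G J fJ ->
  (forall n, (fJ n <= fI n)%N) /\ exists n, (fJ n < fI n)%N.
Proof.
move=> hI hJ hJI hne dI dJ.
have [[hIs hIM] hIg hIsub] := hideal_props hI.
have [[hJs hJM] hJg hJsub] := hideal_props hJ.
have hle : forall n, (fJ n <= fI n)%N /\ (fJ n = fI n -> forall a, I a /\ G n a -> J a /\ G n a).
  move=> n; have [t ht] := G_fin n.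
  apply: (dim_le (t := t)) (dJ n) (dI n).
  - exact: subspace_cap hJsub (G_sub n).
  - exact: subspace_cap hIsub (G_sub n).
  - by move=> a [_ /ht].
  - by move=> a [/hJI].
split; first by move=> n; case: (hle n).
apply: NNPP => hno; apply: hne => a; split; first exact: hJI.
move=> Ia; have [N [_ hN]] := comp_dec a.
rewrite (hN N (leqnn N)).
have [J0 JD JZ] := hJs.
apply: (big_ind J) => // i _.
have hi : fJ i = fI i.
  apply/eqP; rewrite eqn_leq (hle i).1 /= leqNgt; apply/negP => lt.
  by apply: hno; exists i.
by case: ((hle i).2 hi (comp i a) (conj (hIg _ _ Ia) (comp_G _ _))).
Qed.

Lemma deg_bound I J x e gens degs dd : hom_gens G I gens degs ->
  (forall i, (i < size degs)%N -> (nth 0%N degs i <= dd)%N) -> hideal J -> G e x ->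
  same_set I (fun a => exists j r, J j /\ a = j + x * r) -> ~ same_set J I -> (e <= dd)%N.
Proof.
move=> [sz hg hs] hdd hJ hx hI hne.
have [[hJs hJM] hJg hJsub] := hideal_props hJ.
rewrite leqNgt; apply/negP => lt; apply: hne => a; split.
  by move=> Ja; apply/hI; exists a, 0; rewrite mulr0 addr0.
move/hs; apply: (rgen_min (conj hJs hJM)) => i hi.
have : I gens`_i by apply/hs/rgen_gens.
case/hI => j [r [Jj hgi]].
have := comp_hom (nth 0%N degs i) (hg i hi); rewrite eqxx hgi.
rewrite comp_add (comp_mul _ _ hx) ifF ?addr0 => [<-|]; first exact: hJg.
apply/negbTE; rewrite -ltnNge; apply: leq_ltn_trans lt.
by apply: hdd; rewrite sz.
Qed.


Lemma min_gens_exist I gens degs : hom_gens G I gens degs ->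
  exists gens' degs', min_hom_gens G I gens' degs'.
Proof.
move: {2}(size gens) (leqnn (size gens)) => n.
elim: n gens degs => [|n IH] gens degs hn hg.
  exists gens, degs; split => // i hi.
  by move: hn; rewrite leqn0 => /eqP hs; rewrite hs in hi.
case: (classic (forall i, (i < size gens)%N ->
    ~ same_set I (rgen (take i gens ++ drop i.+1 gens)))) => hmin.
  by exists gens, degs.
have [i [hi hsame]] : exists i, (i < size gens)%N /\
    same_set I (rgen (take i gens ++ drop i.+1 gens)).
  apply: NNPP => hno; apply: hmin => i hi hs; apply: hno; exists i; split => //.
case: hg => [sz hgd hs].
apply: (IH (take i gens ++ drop i.+1 gens) (take i degs ++ drop i.+1 degs)).
  rewrite size_cat size_take size_drop hi.
  by move: hn hi; lia.
split => //.
- by rewrite !size_cat !size_take !size_drop sz.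
move=> j; rewrite size_cat size_take size_drop hi => hj.
rewrite !nth_cat !size_take sz hi.
case: ifP => hji; first by rewrite !nth_take //; apply: hgd; exact: ltn_trans hji hi.
rewrite !nth_drop; apply: hgd.
by move: hj hji hi; lia.
Qed.

Lemma zero_hilb I f : same_set I (fun a => a = 0) -> is_hilb G I f -> forall n, f n = 0%N.
Proof.
move=> hI hf n; apply: (dim_unique (hf n)); exists [::]; split => //; split.
  by move=> c _ i.
move=> a; split.
  by case=> /hI -> _; exists (fun _ => 0); rewrite big_ord0.
by case=> c; rewrite big_ord0 => ->; split; [apply/hI | apply: G0].
Qed.

Lemma Rplus0 a : Rplus G a -> G 0 a -> a = 0.
Proof.
move=> [N [f [hf ->]]] h0.
pose f' i := if i is j.+1 then f j else 0.
have hsum : \sum_(i < N) f i = \sum_(i < N.+1) f' i.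
  by rewrite big_ord_recl /= add0r.
have hf' : forall i, G i (f' i) by case=> [|i] /=; [exact: G0 | exact: hf].
have := comp_unique hf' hsum 0; have := comp_hom 0 h0; rewrite eqxx => -> ->.
by [].
Qed.

Lemma hilb_R_plus fR fP : is_hilb G (fun _ => True) fR -> is_hilb G (Rplus G) fP ->
  forall n, fR n = ((n == 0%N) + fP n)%N.
Proof.
move=> dR dP [|n].
  have -> : fP 0%N = 0%N.
    apply: (dim_unique (dP 0%N)); exists [::]; split => //; split; first by move=> c _ i.
    move=> a; split; first by case=> ha h0; rewrite (Rplus0 ha h0); exists (fun _ => 0); rewrite big_ord0.
    by case=> c; rewrite big_ord0 => ->; split; [exists 0%N, (fun _ => 0); split; [move=> i; exact: G0 | rewrite big_ord0] | exact: G0].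
  apply: (dim_unique (dR 0%N)); exists [:: 1]; split => //; split.
    move=> c; rewrite big_ord1 /= => /eqP; rewrite scaler_eq0 oner_eq0 orbF => /eqP hc.
    by case=> // _; rewrite hc.
  move=> a; split.
    case=> _ /G_zero [c ->]; exists (fun _ => c); rewrite big_ord1 /=.
    by rewrite /GRing.scale /=.
  case=> c; rewrite big_ord1 /= => ->; split => //; apply/G_zero.
  by exists (c 0%N).
apply: (dim_unique (dR n.+1)); apply: dim_same (dP n.+1) => a; split; case=> _ Ga; split => //.
exists n.+1, (fun i => if i == n then a else 0); split.
  by move=> i; case: eqP => [->|_] //; exact: G0.
by rewrite big_ord_recr /= eqxx big1 ?add0r // => i _; rewrite ltn_eqF.
Qed.


Lemma x_neq0 I J x : same_set I (fun a => exists j r, J j /\ a = j + x * r) ->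
  ~ same_set J I -> x <> 0.
Proof.
move=> hI hne hx; apply: hne => a; split.
  by move=> Ja; apply/hI; exists a, 0; rewrite mulr0 addr0.
by case/hI => j [r [Jj ->]]; rewrite hx mul0r addr0.
Qed.

Lemma K_eq_J J K x fJ fK : hideal J -> G 0 x -> x <> 0 ->
  same_set K (fun a => J (x * a)) -> is_hilb G K fK -> is_hilb G J fJ ->
  forall n, fK n = fJ n.
Proof.
move=> hJ hx hx0 hK dK dJ.
have [[[J0 JD JZ] _] _ _] := hideal_props hJ.
have [c hc] := (G_zero x).1 hx.
have c0 : c != 0 by apply/negP => /eqP c0; apply: hx0; rewrite hc c0 scale0r.
have dJK : is_hilb G K fJ.
  apply: hilb_same dJ => a; split.
    by move=> Ja; apply/hK; rewrite hc mulr_algl; apply: JZ.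
  move=> Ka; have := (hK a).1 Ka; rewrite hc mulr_algl => /(JZ c^-1).
  by rewrite scalerA mulVf // scale1r.
exact: hilb_unique dK dJK.
Qed.

End Graded.

Local Open Scope ring_scope.
Local Open Scope ring_scope.

Lemma size_prod_ord n (F : 'I_n -> {poly int}) D :
  (forall i, (size (F i) <= D.+1)%N) -> (size (\prod_i F i)%R <= (n * D).+1)%N.
Proof.
elim: n F => [|n IH] F hF; first by rewrite big_ord0 size_poly1.
rewrite big_ord_recr /=; apply: leq_trans (size_polyMleq _ _) _.
have h1 := IH (fun i => F (widen_ord (leqnSn n) i)) (fun i => hF _).
have h2 := hF ord_max.
move: (leq_add h1 h2); case: (_ + _)%N => [|m] /=; rewrite mulSn; lia.
Qed.

Lemma size_det n (M : 'M[{poly int}]_n) D :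
  (forall i j, (size (M i j) <= D.+1)%N) -> (size (\det M) <= (n * D).+1)%N.
Proof.
move=> hM; rewrite /determinant.
apply: (big_ind (fun p : {poly int} => (size p <= (n * D).+1)%N)).
- by rewrite size_poly0.
- by move=> p q hp hq; apply: leq_trans (size_polyD _ _) _; rewrite geq_max hp hq.
- by move=> sg _; rewrite size_Msign; apply: size_prod_ord => i; apply: hM.
Qed.

Lemma sum_ind n (o : option 'I_n) (F : 'I_n -> {poly int}) :
  \sum_l (o == Some l)%:R * F l = if o is Some l then F l else 0.
Proof.
case: o => [l0|]; last by rewrite big1 // => l _; rewrite mul0r.
rewrite (bigD1 l0) //= eqxx mul1r big1 ?addr0 // => l hl.
have -> : (Some l0 == Some l) = false by apply/negbTE; apply: contra hl => /eqP [->].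
by rewrite mul0r.
Qed.

Lemma coefM_low N (r p p' : {poly int}) n : (n < N)%N ->
  (forall m, (m < N)%N -> p`_m = p'`_m) -> (r * p)`_n = (r * p')`_n.
Proof.
move=> hn hp; rewrite !coefM; apply: eq_bigr => j _; rewrite hp //.
exact: leq_ltn_trans (leq_subr _ _) hn.
Qed.

Section Core.
Variables (s' d : nat).
Local Notation s := s'.+1.
Variables (h : 'I_s -> nat -> nat) (jx kx : 'I_s -> option 'I_s) (rx : option 'I_s)
  (e : 'I_s -> nat).

Definition ser (o : option 'I_s) n : nat := if o is Some l then h l n else 0%N.

Hypothesis he : forall i, (e i <= d)%N.
Hypothesis hid : forall i n, (h i n)%:Z = (ser (jx i) n)%:Z +
   (if (e i <= n)%N then (n == e i)%:R + (ser rx (n - e i))%:Z - (ser (kx i) (n - e i))%:Z else 0).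
Hypothesis h0 : forall i, e i = 0%N -> jx i = kx i.
Hypothesis hstr : forall i l, (if e i == 0%N then rx == Some l else jx i == Some l) ->
  (forall n, (h l n <= h i n)%N) /\ exists n, (h l n < h i n)%N.

Definition Mx : 'M[{poly int}]_s := \matrix_(i, l) ((i == l)%:R - (jx i == Some l)%:R +
   'X^(e i) * ((kx i == Some l)%:R - (rx == Some l)%:R)).
Definition Bv : 'cV[{poly int}]_s := \col_i 'X^(e i).
Definition qq := \det Mx.
Definition pp i := (\adj Mx *m Bv) i 0.

Definition T N l : {poly int} := \poly_(t < N) (h l t)%:Z.
Definition Tser N (o : option 'I_s) : {poly int} := if o is Some l then T N l else 0.

Lemma coefT N l n : (n < N)%N -> (T N l)`_n = (h l n)%:Z.
Proof. by move=> hn; rewrite coef_poly hn. Qed.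

Lemma coefTser N o n : (n < N)%N -> (Tser N o)`_n = (ser o n)%:Z.
Proof. by case: o => [l|] hn /=; rewrite ?coefT ?coef0. Qed.

Lemma Msys N i n : (n < N)%N -> (\sum_l Mx i l * T N l)`_n = (Bv i 0)`_n.
Proof.
move=> hn.
have -> : \sum_l Mx i l * T N l = T N i - Tser N (jx i) + 'X^(e i) * (Tser N (kx i) - Tser N rx).
  rewrite (eq_bigr (fun l => (Some i == Some l)%:R * T N l - (jx i == Some l)%:R * T N l +
     'X^(e i) * ((kx i == Some l)%:R * T N l - (rx == Some l)%:R * T N l))); last first.
    by move=> l _; rewrite mxE; rewrite mulrDl mulrBl -mulrA mulrBl.
  rewrite big_split /= sumrB -mulr_sumr sumrB !sum_ind.
  by case: (jx i) => [?|]; case: (kx i) => [?|]; case: rx => [?|].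
rewrite mxE coefD coefB coefXnM coefXn coefB !coefTser ?coefT //; last first.
  by apply: leq_ltn_trans (leq_subr _ _) hn.
  by apply: leq_ltn_trans (leq_subr _ _) hn.
rewrite hid; case: ltnP => hle.
  by rewrite ltn_eqF // !addr0 subrr.
ring.
Qed.


Lemma cramer_coef i n : (qq * T n.+1 i)`_n = (pp i)`_n.
Proof.
pose V : 'cV[{poly int}]_s := \col_l T n.+1 l.
have E1 : forall l m, (m < n.+1)%N -> ((Mx *m V) l 0)`_m = (Bv l 0)`_m.
  move=> l m hm; rewrite -(Msys l hm) mxE; apply: (congr1 (fun p : {poly int} => p`_m)).
  apply: eq_bigr => j _.
  have hV : V j 0 = T n.+1 j by rewrite /V mxE.
  by rewrite hV.
have E2 : (\adj Mx *m (Mx *m V)) i 0 = qq * T n.+1 i.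
  by rewrite mulmxA mul_adj_mx mul_scalar_mx !mxE.
rewrite -E2 /pp !mxE !coef_sum; apply: eq_bigr => l _.
by apply: (coefM_low (N := n.+1)) => // m hm; apply: E1.
Qed.

Definition Pc i l : bool := if e i == 0%N then rx == Some l else jx i == Some l.
Definition P0 : 'M[int]_s := \matrix_(i, l) (Pc i l)%:R.

Lemma map_Mx0 : map_mx (horner_eval 0) Mx = 1 - P0.
Proof.
apply/matrixP => i l; rewrite !mxE horner_evalE /Pc.
rewrite !(hornerD, hornerN, hornerM, hornerMn, hornerC, hornerXn, expr0n).
case: (boolP (e i == 0%N)) => [he0|hne]; last by rewrite mul0r addr0.
by rewrite (h0 (eqP he0)) mul1r addrA subrK.
Qed.

Lemma P0_nilpotent : exists m, P0 ^+ m = 0.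
Proof.
have [wit hwit] : exists wit : 'I_s * 'I_s -> nat, forall p,
    Pc p.1 p.2 -> (h p.2 (wit p) < h p.1 (wit p))%N.
  apply: (choice (fun p n => Pc p.1 p.2 -> (h p.2 n < h p.1 n)%N)) => p.
  case: (boolP (Pc p.1 p.2)) => hp; last by exists 0%N.
  by have [_ [n hn]] := hstr hp; exists n.
pose Nw := (\max_p wit p).+1.
pose w i := (\sum_(t < Nw) h i t)%N.
have wlt : forall i l, Pc i l -> (w l < w i)%N.
  move=> i l hp; have [hle _] := hstr hp.
  have hw := hwit (i, l) hp.
  have ht : (wit (i, l) < Nw)%N by rewrite ltnS (leq_bigmax (i, l)).
  rewrite /w (bigD1 (Ordinal ht)) //= [X in (_ < X)%N](bigD1 (Ordinal ht)) //=.
  by rewrite -addSn; apply: leq_add => //; apply: leq_sum => t _; apply: hle.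
have Pk : forall m i l, (w i < w l + m)%N -> (P0 ^+ m) i l = 0.
  elim=> [|m IH] i l hm.
    rewrite expr0 -idmxE mxE; case: eqP => // eil.
    by move: hm; rewrite eil addn0 ltnn.
  rewrite exprSr -mulmxE mxE big1 // => j _.
  rewrite [P0 j l]mxE; case: (boolP (Pc j l)) => hjl; last by rewrite mulr0.
  rewrite IH ?mul0r //; have := wlt _ _ hjl; lia.
exists (\max_i w i).+1; apply/matrixP => i l; rewrite mxE Pk //.
by apply: leq_trans (leq_addl _ _); rewrite ltnS leq_bigmax.
Qed.

Lemma qq_neq0 : qq != 0.
Proof.
apply/negP => /eqP hq.
have := det_map_mx (horner_eval 0) Mx; rewrite -/qq hq rmorph0 map_Mx0 => hd.
have [m hm] := P0_nilpotent.
have hS : (1 - P0) * (\sum_(t < m) P0 ^+ t) = 1.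
  by rewrite -opprB mulNr -subrX1 hm sub0r opprK.
have := congr1 determinant hS; rewrite -mulmxE det_mulmx hd mul0r -idmxE det1.
by move/eqP; rewrite eq_sym oner_eq0.
Qed.


Lemma size_bnat (b : bool) : (size (b%:R : {poly int}) <= 1)%N.
Proof. by case: b; rewrite /= ?mulr1n ?mulr0n ?size_poly0 ?size_poly1. Qed.

Lemma size_sub_le (p q : {poly int}) D : (size p <= D)%N -> (size q <= D)%N -> (size (p - q)%R <= D)%N.
Proof.
move=> hp hq; apply: leq_trans (size_polyD _ _) _.
by rewrite size_polyN geq_max hp hq.
Qed.

Lemma size_Mx i l : (size (Mx i l) <= d.+1)%N.
Proof.
rewrite mxE; apply: leq_trans (size_polyD _ _) _; rewrite geq_max; apply/andP; split.
  by apply: (@leq_trans 1%N) => //; apply: size_sub_le; apply: size_bnat.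
apply: leq_trans (size_polyMleq _ _) _; rewrite size_polyXn.
have : (size (((kx i == Some l)%:R - (rx == Some l)%:R)%R : {poly int}) <= 1)%N.
  by apply: size_sub_le; apply: size_bnat.
have := he i; case: (size _) => [|m] /=; lia.
Qed.

Lemma size_qq : (size qq <= (d * s).+1)%N.
Proof. by rewrite mulnC; apply: size_det => i j; apply: size_Mx. Qed.

Lemma size_pp i : (size (pp i) <= (d * s).+1)%N.
Proof.
rewrite /pp mxE.
apply: (big_ind (fun p : {poly int} => (size p <= (d * s).+1)%N)).
- by rewrite size_poly0.
- by move=> p q hp hq; apply: leq_trans (size_polyD _ _) _; rewrite geq_max hp hq.
move=> l _; rewrite !mxE /cofactor -mulrA size_Msign.
apply: leq_trans (size_polyMleq _ _) _; rewrite size_polyXn.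
have : (size (\det (row' l (col' i Mx))) <= (s' * d).+1)%N.
  by apply: size_det => a b; have := size_Mx (lift l a) (lift i b); rewrite !mxE.
have := he l; case: (size _) => [|m] /=; rewrite mulnS; lia.
Qed.

Lemma core_rational : (forall i, rational_series_deg (d * s)%N (h i)) /\ rational_series_deg (d * s)%N (fun n => ((n == 0%N) + ser rx n)%N).
Proof.
have hi : forall i n, \sum_(j < n.+1) qq`_j * (h i (n - j)%N)%:Z = (pp i)`_n.
  move=> i n; rewrite -cramer_coef coefM; apply: eq_bigr => j _.
  by rewrite coefT // ltnS leq_subr.
split.
  move=> i; exists (pp i), qq; split; last by rewrite size_pp size_qq.
  by split; [exact: qq_neq0 | exact: hi].
exists (qq + if rx is Some r then pp r else 0), qq; split; last first.
  split; last exact: size_qq.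
  apply: leq_trans (size_polyD _ _) _; rewrite geq_max size_qq.
  by case: rx => [r|]; rewrite ?size_pp ?size_poly0.
split; first exact: qq_neq0.
move=> n; rewrite coefD.
rewrite (eq_bigr (fun j : 'I_n.+1 => qq`_j * ((n - j)%N == 0%N)%:R +
   qq`_j * (ser rx (n - j))%:Z)); last first.
  by move=> j _; rewrite PoszD mulrDr; case: (_ == _).
rewrite big_split /=; congr (_ + _).
  rewrite big_ord_recr /= subnn eqxx mulr1 big1 ?add0r // => j _.
  by rewrite subn_eq0 leqNgt ltn_ord mulr0.
by case: rx => [r|] /=; [exact: hi | rewrite big1 ?coef0 // => j _; rewrite mulr0].
Qed.

End Core.

Local Open Scope ring_scope.
Local Open Scope ring_scope.

Lemma rat_ext b (f g : nat -> nat) : (forall n, f n = g n) ->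
  rational_series_deg b g -> rational_series_deg b f.
Proof.
move=> e [p [q [[hq hpq] hs]]]; exists p, q; split => //; split => // n.
by rewrite -hpq; apply: eq_bigr => i _; rewrite e.
Qed.

Lemma rat_zero b : rational_series_deg b (fun _ => 0%N).
Proof.
exists 0, 1; split; last by rewrite size_poly0 size_poly1.
split; first exact: oner_neq0.
by move=> n; rewrite coef0 big1 // => i _; rewrite mulr0.
Qed.

Lemma rat_one b : rational_series_deg b (fun n => nat_of_bool (n == 0%N)).
Proof.
exists 1, 1; split; last by rewrite size_poly1.
split; first exact: oner_neq0.
move=> n; rewrite big_ord_recl /= subn0 !coef1 eqxx mul1r big1 ?addr0.
  by case: (n == 0%N).
by move=> i _; rewrite coef1 mul0r.
Qed.

Lemma rat_deg_rat b f : rational_series_deg b f -> rational_series f.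
Proof. by case=> p [q [h _]]; exists p, q. Qed.

Section Main.
Variables (k : fieldType) (A : algType k) (G : nat -> A -> Prop) (F : (A -> Prop) -> Prop) (d : nat).
Hypotheses (hG : standard_graded G) (hF : rate_filtration G F) (hd : filtration_of_degree G F d).
Implicit Types (I J K : A -> Prop).

Lemma F_hideal I : F I -> hideal G I.
Proof. by case: hF => h _ _ _; apply: h. Qed.

Lemma F_hilb I : F I -> exists f, is_hilb G I f.
Proof.
move=> FI; apply: (hilb_exists hG).
by have [] := hideal_props hG (F_hideal FI).
Qed.

Lemma F_gens I : F I -> exists gens degs, hom_gens G I gens degs /\
  forall i, (i < size degs)%N -> (nth 0%N degs i <= d)%N.
Proof.
move=> FI; have [gens [degs hg]] := F_hideal FI.
have [gens' [degs' hm]] := min_gens_exist hg.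
exists gens', degs'; split; first by case: hm.
move=> i hi; apply: leq_trans (hd FI (ex_intro _ gens' (ex_intro _ degs' (conj hm erefl)))).
by apply: (@leq_bigmax_seq _ _ xpredT (fun e => e)) => //; exact: mem_nth.
Qed.

Lemma F_step I : F I -> ~ same_set I (fun a => a = 0) ->
  exists J x e K, [/\ F J, F K, G e x, (e <= d)%N &
    [/\ same_set I (fun a => exists j r, J j /\ a = j + x * r),
    same_set K (fun a => J (x * a)) & ~ same_set J I]].
Proof.
move=> FI nz; case: hF => _ _ _ h4.
have [J [x [FJ [ne [Ix [[e Gx] [hI [_ [K [FK hK]]]]]]]]]] := h4 I FI nz.
exists J, x, e, K; split => //.
have [gens [degs [hg hb]]] := F_gens FI.
exact: (deg_bound hG hg hb (F_hideal FJ) Gx hI ne).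
Qed.


Lemma classify (L : seq (nat -> nat)) f :
  (forall g, in_H G F g -> g <> (fun _ => 0%N) ->
     exists2 i, (i < size L)%N & g = nth (fun _ => 0%N) L i) ->
  in_H G F f -> (forall n, f n = 0%N) \/ exists2 i, (i < size L)%N & f = nth (fun _ => 0%N) L i.
Proof.
move=> hall hf; case: (classic (f = fun _ => 0%N)) => [-> | ne]; first by left.
by right; apply: hall.
Qed.

Lemma R_plus_hilb : exists fP, is_hilb G (Rplus G) fP /\ in_H G F fP.
Proof.
case: hF => _ _ [IP [FIP hIP]] _.
have [fP dP] := F_hilb FIP.
by exists fP; split; [exact: hilb_same hIP dP | exists IP].
Qed.

Lemma R_hilb : exists fR, is_hilb G (fun _ => True) fR.
Proof. by apply: (hilb_exists hG); split. Qed.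

Lemma row_data s' (L : seq (nat -> nat)) (sz : size L = s'.+1)
  (hL : forall i, (i < size L)%N -> in_H G F (nth (fun _ => 0%N) L i) /\
           nth (fun _ => 0%N) L i <> (fun _ => 0%N))
  (hall : forall f, in_H G F f -> f <> (fun _ => 0%N) ->
           exists2 i, (i < size L)%N & f = nth (fun _ => 0%N) L i)
  fP fR (rx : option 'I_s'.+1) (dP : is_hilb G (Rplus G) fP) (dR : is_hilb G (fun _ => True) fR)
  (hrx : forall n, fP n = ser (fun j : 'I_s'.+1 => nth (fun _ => 0%N) L j) rx n) (i : 'I_s'.+1) :
  let h := fun j : 'I_s'.+1 => nth (fun _ => 0%N) L j in
  exists t : nat * option 'I_s'.+1 * option 'I_s'.+1,
       [/\ (t.1.1 <= d)%N, (t.1.1 = 0%N -> t.1.2 = t.2),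
        (forall n, (h i n)%:Z = (ser h t.1.2 n)%:Z + (if (t.1.1 <= n)%N then (n == t.1.1)%:R + (ser h rx (n - t.1.1))%:Z - (ser h t.2 (n - t.1.1))%:Z else 0)) &
        (forall l, (if t.1.1 == 0%N then rx == Some l else t.1.2 == Some l) -> (forall n, (h l n <= h i n)%N) /\ exists n, (h l n < h i n)%N)].
Proof.
move=> h.
have hRser := hilb_R_plus hG dR dP.
have hi : (i < size L)%N by rewrite sz.
have [HI nz] := hL i hi.
case: HI => I [FI dI].
have Inz : ~ same_set I (fun a => a = 0).
  move=> h0; apply: nz; apply: functional_extensionality => n /=; exact: (zero_hilb hG h0 dI n).
have [J [x [e [K [FJ FK Gx hed [hI hK ne]]]]]] := F_step FI Inz.
have [fJ dJ] := F_hilb FJ; have [fK dK] := F_hilb FK.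
have hopt : forall f, in_H G F f -> exists o : option 'I_s'.+1, forall n, f n = ser h o n.
  move=> f hf; case: (classify hall hf) => [h0|[j hj ->]]; first by exists None.
  by rewrite sz in hj; exists (Some (Ordinal hj)).
have [oj hoj] := hopt fJ (ex_intro _ J (conj FJ dJ)).
have [ok' hok'] := hopt fK (ex_intro _ K (conj FK dK)).
pose ok := if e == 0%N then oj else ok'.
have hok : forall n, fK n = ser h ok n.
  rewrite /ok; case: eqP => [e0|_]; last exact: hok'.
  move=> n; rewrite -hoj; apply: (K_eq_J hG (F_hideal FJ) _ _ hK dK dJ n).
    by rewrite -e0.
  exact: x_neq0 hI ne.
have hid := hilb_identity hG (F_hideal FJ) Gx hI hK dI dJ dK dR.
exists (e, oj, ok); split => //=.
- by move=> e0; rewrite /ok e0 eqxx.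
- move=> n; have := hid n; case: (leqP e n) => hen.
    rewrite hRser hoj hok hrx.
    have -> : (n - e == 0)%N = (n == e) by rewrite subn_eq0 eqn_leq hen andbT.
    have -> : ((n == e)%:R : int) = Posz (n == e) by case: (n == e).
    move/(congr1 Posz); rewrite !PoszD => E.
    rewrite /h in E *; lia.
  by rewrite !addn0 hoj addr0 => E; rewrite /h E.
- move=> l; case: eqP => [e0 | ne0].
    move/eqP => rxl.
    have hil : forall n, h i n = ((n == 0%N) + h l n)%N.
      move=> n; have := hid n; rewrite e0 /= subn0 (K_eq_J hG (F_hideal FJ) _ _ hK dK dJ n).
      + rewrite [(fJ n + _)%N]addnC => /eqP; rewrite eqn_add2r => /eqP E.
        by rewrite /h E hRser hrx rxl.
      + by rewrite -e0.
      + exact: x_neq0 hI ne.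
    split; first by move=> n; rewrite hil leq_addl.
    by exists 0%N; rewrite hil.
  move/eqP => ojl.
  have hJI : forall a, J a -> I a by move=> a Ja; apply/hI; exists a, 0; rewrite mulr0 addr0.
  have [h1 [n h2]] := hilb_strict hG (F_hideal FI) (F_hideal FJ) hJI ne dI dJ.
  have hjl : forall n, fJ n = h l n by move=> m; rewrite hoj ojl.
  by split; [move=> m; rewrite -hjl | exists n; rewrite -hjl].
Qed.


Lemma part2 s : H_nonzero_card G F s ->
  (forall f, is_hilb G (fun _ => True) f -> rational_series_deg (d * s) f) /\
  (forall I f, F I -> is_hilb G I f -> rational_series_deg (d * s) f).
Proof.
case=> L [sz hinj hL hall].
have [fP [dP HP]] := R_plus_hilb.
have hRser : forall f, is_hilb G (fun _ => True) f -> forall n, f n = ((n == 0%N) + fP n)%N.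
  move=> f hf n; exact: (hilb_R_plus hG hf dP n).
case: s sz => [|s'] sz.
  have z : forall g, in_H G F g -> forall n, g n = 0%N.
    by move=> g hg; case: (classify hall hg) => // [[i]]; rewrite sz.
  split.
    move=> f hf; apply: (rat_ext (g := fun n => nat_of_bool (n == 0%N))); last exact: rat_one.
    by move=> n; rewrite (hRser f hf n) (z _ HP) addn0.
  move=> I f FI hf; apply: (rat_ext (g := fun _ => 0%N)); last exact: rat_zero.
  by apply: z; exists I.
pose h := fun j : 'I_s'.+1 => nth (fun _ => 0%N) L j.
have [rx hrx] : exists rx : option 'I_s'.+1, forall n, fP n = ser h rx n.
  case: (classify hall HP) => [h0|[i hi ->]]; first by exists None.
  by rewrite sz in hi; exists (Some (Ordinal hi)).
have [fR dR] := R_hilb.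
have row := row_data sz hL hall dP dR hrx; cbv zeta in row.
have [tf htf] := choice _ row.
have [c1 c2] : (forall i, rational_series_deg (d * s'.+1) (h i)) /\
    rational_series_deg (d * s'.+1) (fun n => ((n == 0%N) + ser h rx n)%N).
  apply: (@core_rational s' d h (fun i => (tf i).1.2) (fun i => (tf i).2) rx (fun i => (tf i).1.1)).
  - by move=> i; case: (htf i).
  - by move=> i n; case: (htf i) => _ _ H _; apply: H.
  - by move=> i; case: (htf i).
  - by move=> i l; case: (htf i) => _ _ _; apply.
split.
  by move=> f hf; apply: (rat_ext _ c2) => n; rewrite (hRser f hf n) hrx.
move=> I f FI hf; case: (classify hall (ex_intro _ I (conj FI hf))) => [h0|[i hi ->]].
  by apply: (rat_ext (g := fun _ => 0%N)) => //; exact: rat_zero.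
by rewrite sz in hi; exact: (c1 (Ordinal hi)).
Qed.

End Main.

Section Build.
Variable P : (nat -> nat) -> Prop.
Definition memF (f : nat -> nat) (L : seq (nat -> nat)) :=
  exists2 i, (i < size L)%N & f = nth (fun _ => 0%N) L i.

Lemma build_list (L0 : seq (nat -> nat)) : exists L : seq (nat -> nat),
  [/\ (forall i j, (i < size L)%N -> (j < size L)%N ->
           nth (fun _ => 0%N) L i = nth (fun _ => 0%N) L j -> i = j),
      (forall i, (i < size L)%N -> P (nth (fun _ => 0%N) L i))
    & (forall f, P f -> memF f L0 -> memF f L)].
Proof.
elim: L0 => [|g L0 [L [hd hp hc]]].
  by exists [::]; split => // f _ [i].
case: (classic (P g /\ ~ memF g L)) => [[pg ng]|hno].
  exists (g :: L); split.
  - case=> [|i] [|j] //= hi hj.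
    + by move=> e; case: ng; exists j.
    + by move=> e; case: ng; exists i.
    + by move=> e; congr S; apply: hd.
  - by case=> [|i] //= hi; apply: hp.
  - move=> f pf [[|i] hi /= e]; first by exists 0%N.
    have [j hj ->] := hc _ pf (ex_intro2 _ _ i hi e).
    by exists j.+1.
exists L; split => // f pf [[|i] hi /= e].
  apply: NNPP => nm; apply: hno; split; [by rewrite -e | by rewrite -e].
exact: hc pf (ex_intro2 _ _ i hi e).
Qed.
End Build.

Lemma build_L (k : fieldType) (A : algType k) (G : nat -> A -> Prop) (F : (A -> Prop) -> Prop) :
  H_finite G F -> exists s, H_nonzero_card G F s.
Proof.
case=> L0 hL0.
have [L [hd hp hc]] := build_list (fun f => in_H G F f /\ f <> (fun _ => 0%N)) L0.
exists (size L), L; split => //.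
by move=> f hf nz; apply: hc => //; apply: hL0.
Qed.

Local Close Scope ring_scope.

Theorem mainTheorem15 (k : fieldType) (A : algType k) (G : nat -> A -> Prop)
    (F : (A -> Prop) -> Prop) (d : nat) :
  standard_graded G ->
  rate_filtration G F ->
  filtration_of_degree G F d ->
  H_finite G F ->
  ((forall f, is_hilb G (fun _ => True) f -> rational_series f) /\
   (forall I f, F I -> is_hilb G I f -> rational_series f)) /\
  (forall s, H_nonzero_card G F s ->
     (forall f, is_hilb G (fun _ => True) f -> rational_series_deg (d * s) f) /\
     (forall I f, F I -> is_hilb G I f -> rational_series_deg (d * s) f)).
Proof.
move=> hG hF hd hH.
have p2 := part2 hG hF hd.
split; last exact: p2.
have [s hs] := build_L hH.
have [c1 c2] := p2 s hs.
split; first by move=> f hf; apply: rat_deg_rat (c1 f hf).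
by move=> I f FI hf; apply: rat_deg_rat (c2 I f FI hf).
Qed.
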